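(* The approximate loss of the pseudo-network is convex with respect to the trainable parameters; consequently, for all $t\in[T]$, for any parameters $\theta^*$ and any training set $\mathcal X$ of points $x$ with $\|x\|_2\le\frac12$, $$\tilde L(\nabla g^{(t)},\mathcal X)-\tilde L(\nabla g^*,\mathcal X)\le\big\langle\nabla_\theta\tilde L(\nabla g^{(t)},\mathcal X),\ \theta^{(t)}-\theta^*\big\rangle,$$ where $g^{(t)}$ and $g^*$ denote the pseudo-network models with parameters $\theta^{(t)}$ and $\theta^*$ respectively.
   Context: UNF pseudo-network setting. For $\|x_{1:i}\|_2\le1$, $\hat x_{1:i}=(x_1,\dots,x_i,\sqrt{1-\|x_{1:i}\|_2^2})$. $\sigma'(u)=\mathbf 1\{u\ge0\}$; $\phi(u)=e^u$ ($u<0$), $u+1$ ($u\ge0$). Fixed initial parameters $a_{i,r}\in\mathbb{R}$, $\bar w_{i,r}\in\mathbb{R}^{i+1}$, $\bar b_{i,r}\in\mathbb{R}$ ($i\in[d],r\in[m]$); parameters $\theta=(\theta_1,\dots,\theta_d)$, $\theta_i=(w_{i,r},b_{i,r})_{r\in[m]}$. Pseudo-network $P(x_{1:i};\theta_i)=\sum_ra_{i,r}\sigma'(\langle\bar w_{i,r},\hat x_{1:i}\rangle+\bar b_{i,r})(\langle\bar w_{i,r}+w_{i,r},\hat x_{1:i}\rangle+\bar b_{i,r}+b_{i,r})$ and $\frac{\partial g_i}{\partial x_i}(x_{1:i})=\phi(P(x_{1:i};\theta_i))$. Quadrature with $Q$ points: $\Delta_{x_i}=(x_i+1)/Q$, $q^{(j)}_i=(x_1,\dots,x_{i-1},-1+j\Delta_{x_i})$.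 Approximate loss $\tilde L(\nabla g,x)=\sum_{i=1}^d\big(\sum_{j=1}^Q\Delta_{x_i}\phi(P(q^{(j)}_i;\theta_i))-\log\phi(P(x_{1:i};\theta_i))\big)$ and $\tilde L(\nabla g,\mathcal X)=\frac1{|\mathcal X|}\sum_{x\in\mathcal X}\tilde L(\nabla g,x)$. $\theta^{(t)}$, $t\in[T]$, is any sequence of parameters (in the paper, SGD iterates). *)

(* Defs.v *)
From HB Require Import structures.
From mathcomp Require Import all_boot all_order all_algebra.
From mathcomp Require Import all_classical all_reals all_analysis.
Set Implicit Arguments. Unset Strict Implicit. Unset Printing Implicit Defensive.
Import Order.TTheory GRing.Theory Num.Theory.
Local Open Scope ring_scope.

(* Indexing conventions (0-based): the paper's index i in [d] is our
   i : 'I_d, so x_{1:i} (paper) = coordinates 0..i (i.+1 coordinates), and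
   \hat x_{1:i} has i.+2 coordinates; neurons r in [m] are r : 'I_m. *)

Record Init (R : realType) (d m : nat) := MkInit {
  a_init : 'I_d -> 'I_m -> R;
  wbar : forall i : 'I_d, 'I_m -> 'I_(i.+2) -> R;
  bbar : 'I_d -> 'I_m -> R }.

(* Index set of the trainable parameters theta = (theta_1,...,theta_d),
   theta_i = (w_{i,r}, b_{i,r})_r : a parameter is a triple (i, r, c) with
   c = Some k the k-th coordinate of w_{i,r} in R^{i+1} (0-based, k < i.+2),
   and c = None the bias b_{i,r}. *)
Definition PIdx (d m : nat) : finType :=
  {i : 'I_d & ('I_m * option 'I_(i.+2))%type}.

Definition Param (R : realType) (d m : nat) := {ffun PIdx d m -> R}.

Definition w_of (R : realType) d m (th : Param R d m) (i : 'I_d) (r : 'I_m)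
  (k : 'I_(i.+2)) : R :=
  th (existT (fun i : 'I_d => ('I_m * option 'I_(i.+2))%type) i (r, Some k)).
Definition b_of (R : realType) d m (th : Param R d m) (i : 'I_d) (r : 'I_m) : R :=
  th (existT (fun i : 'I_d => ('I_m * option 'I_(i.+2))%type) i (r, None)).

(* Points of R^d, read as a coordinate function on nat (0 outside [0,d)). *)
Definition coord (R : realType) d (x : 'rV[R]_d) (k : nat) : R :=
  if @insub _ _ 'I_d k is Some k' then x ord0 k' else 0.

Definition norm2 (R : realType) d (x : 'rV[R]_d) : R :=
  Num.sqrt (\sum_(k < d) x ord0 k ^+ 2).

(* \hat y_{1:i} = (y_1..y_i, sqrt(1 - ||y_{1:i}||^2)) for our index i
   (i.+1 coordinates y 0 .. y i, then the extra one). *)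
Definition hatx (R : realType) (y : nat -> R) (i : nat) (k : 'I_(i.+2)) : R :=
  if (k < i.+1)%N then y k else Num.sqrt (1 - \sum_(l < i.+1) y l ^+ 2).

Definition sigma' (R : realType) (u : R) : R := if 0 <= u then 1 else 0.

Definition phi (R : realType) (u : R) : R := if u < 0 then expR u else u + 1.

Definition pseudo (R : realType) d m (I0 : Init R d m) (th : Param R d m)
  (i : 'I_d) (y : nat -> R) : R :=
  \sum_(r < m)
    a_init I0 i r
    * sigma' (\sum_(k < i.+2) wbar I0 r k * hatx y k + bbar I0 i r)
    * (\sum_(k < i.+2) (wbar I0 r k + w_of th r k) * hatx y k
       + bbar I0 i r + b_of th i r).

(* Quadrature step and points for coordinate i. *)
Definition Delta (R : realType) (Q : nat) (y : nat -> R) (i : nat) : R :=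
  (y i + 1) / Q%:R.
Definition qpt (R : realType) (Q : nat) (y : nat -> R) (i j : nat) : nat -> R :=
  fun k => if k == i then -1 + j%:R * Delta Q y i else y k.

Definition Lx (R : realType) d m (Q : nat) (I0 : Init R d m) (th : Param R d m)
  (x : 'rV[R]_d) : R :=
  let y := coord x in
  \sum_(i < d)
    (\sum_(1 <= j < Q.+1) Delta Q y i * phi (pseudo I0 th i (qpt Q y i j))
     - ln (phi (pseudo I0 th i y))).

Definition LX (R : realType) d m (Q : nat) (I0 : Init R d m)
  (X : seq 'rV[R]_d) (th : Param R d m) : R :=
  (\sum_(x <- X) Lx Q I0 th x) / (size X)%:R.

Definition partial (R : realType) d m (F : Param R d m -> R) (th : Param R d m)
  (k : PIdx d m) : R :=
  derive1 (fun s : R => F [ffun l => th l + (if l == k then s else 0)]) 0.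

Definition grad (R : realType) d m (F : Param R d m -> R) (th : Param R d m) :
  Param R d m := [ffun k => partial F th k].

Definition pdot (R : realType) d m (u v : Param R d m) : R :=
  \sum_(k : PIdx d m) u k * v k.

(* Main.v *)
Require Import Defs.
From HB Require Import structures.
From mathcomp Require Import all_boot all_order all_algebra.
From mathcomp Require Import all_classical all_reals all_analysis.
From mathcomp Require Import ring lra.
Import Order.TTheory GRing.Theory Num.Theory numFieldNormedType.Exports.
Set Implicit Arguments. Unset Strict Implicit. Unset Printing Implicit Defensive.
Local Open Scope ring_scope.
Local Open Scope convex_scope.

Lemma tangent_derive (R : realType) (k k' : R -> R) (u : R) :
  (forall a b, k a + k' a * (b - a) <= k b) -> {for u, continuous k'} ->
  is_derive u 1 k (k' u).
Proof.
move=> tan hc.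
apply/is_derive1_caratheodory.
exists (fun z => if z == u then k' u else (k z - k u) / (z - u)); split.
- move=> z; case: eqP => [->|/eqP zu]; first by rewrite !subrr mulr0.
  by rewrite divfK // subr_eq0.
- apply/cvgrPdist_lt => e e0; rewrite eqxx.
  move/cvgrPdist_lt: hc => /(_ e e0); apply: filterS => z hz.
  case: ifP => [_|/eqP zu]; first by rewrite subrr normr0.
  apply: le_lt_trans hz.
  have w0 : z - u != 0 by rewrite subr_eq0; apply/eqP.
  have t1 := tan u z; have t2 := tan z u.
  have -> : k' u - (k z - k u) / (z - u) = (k' u * (z - u) - (k z - k u)) / (z - u).
    by field.
  rewrite normrM normfV ler_pdivrMr ?normr_gt0 //.
  rewrite -normrM.
  have -> : (k' u - k' z) * (z - u) = k' u * (z - u) - k' z * (z - u) by ring.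
  rewrite (ler0_norm (x := k' u * (z - u) - (k z - k u))); last lra.
  rewrite ler0_norm; lra.
- by rewrite eqxx.
Qed.

Definition phid (R : realType) (u : R) : R := expR (Num.min u 0).
Definition lphid (R : realType) (u : R) : R := - (1 + Num.max u 0)^-1.

Lemma phi_tan (R : realType) (a b : R) : phi a + phid a * (b - a) <= phi b.
Proof.
rewrite /phi /phid; case: (ltP a 0) => ha; case: (ltP b 0) => hb.
- 
  have -> : expR b = expR (b - a) * expR a by rewrite -expRD subrK.
  have := expR_ge1Dx (b - a); have := expR_gt0 a; nra.
- 
  have h1 := expR_ge1Dx (- a); have h0 := expR_gt0 a.
  have h2 : expR a * expR (- a) = 1 by rewrite -expRD subrr expR0.
  have h3 : expR a <= 1 by nra.
  nra.
- rewrite expR0.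
  have := expR_ge1Dx b; lra.
- rewrite expR0; lra.
Qed.

Lemma ln_tan_aux (R : realType) (a c : R) : 0 <= a -> 0 <= c ->
  ln (c + 1) <= ln (a + 1) + (c - a) * (1 + a)^-1.
Proof.
move=> ha hc.
set x := (c - a) * (1 + a)^-1.
have a1 : 0 < 1 + a by lra.
have hx : -1 < x.
  rewrite /x -ltr_pdivrMr ?invr_gt0 // invrK; lra.
have -> : c + 1 = (a + 1) * (1 + x).
  rewrite /x; field; lra.
rewrite lnM ?posrE; last 2 first.
- lra.
- lra.
have := le_ln1Dx hx; lra.
Qed.

Lemma lphi_tan (R : realType) (a b : R) :
  - ln (phi a) + lphid a * (b - a) <= - ln (phi b).
Proof.
rewrite /phi /lphid; case: (ltP a 0) => ha; case: (ltP b 0) => hb.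
- rewrite !expRK addr0 invr1; lra.
- rewrite expRK addr0 invr1.
  have := le_ln1Dx (x := b) ltac:(lra); rewrite addrC; lra.
- rewrite expRK.
  have := ln_tan_aux ha (lexx 0); rewrite add0r ln1.
  have s0 : 0 < (1 + a)^-1 by rewrite invr_gt0; lra.
  have s1 : (1 + a)^-1 <= 1.
    rewrite invf_le1; lra.
  nra.
- idtac.
  have := ln_tan_aux ha hb; lra.
Qed.

Lemma phid_cont (R : realType) : continuous (@phid R).
Proof.
move=> u; rewrite /phid.
apply: (@continuous_comp _ _ _ (fun u : R => Num.min u 0) expR); last first.
  exact: continuous_expR.
apply: (@continuous_min _ _ id (cst 0) u); [exact: cvg_id|exact: cvg_cst].
Qed.

Lemma lphid_cont (R : realType) : continuous (@lphid R).
Proof.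
move=> u; rewrite /lphid.
apply: cvgN; apply: cvgV.
  rewrite gt_eqF //; have : (0:R) <= Num.max u 0 by rewrite le_max lexx orbT.
  lra.
apply: cvgD; first exact: cvg_cst.
apply: (@continuous_max _ _ id (cst 0) u); [exact: cvg_id|exact: cvg_cst].
Qed.

Lemma tangent_affine (R : realType) (h h' : R -> R) (a b : R) :
  (forall x y, h x + h' x * (y - x) <= h y) -> continuous h' ->
  is_derive (0:R) 1 (fun s => h (a + b * s)) (h' a * b).
Proof.
move=> tan hc.
have := @tangent_derive R (fun s => h (a + b * s)) (fun s => h' (a + b * s) * b) 0.
rewrite mulr0 addr0; apply.
- move=> x y; have := tan (a + b * x) (a + b * y).
  have -> : a + b * y - (a + b * x) = b * (y - x) by ring.
  by rewrite mulrA.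
- apply: cvgM; last exact: cvg_cst.
  apply: (@continuous_comp _ _ _ (fun s => a + b * s) h'); last exact: hc.
  apply: cvgD; first exact: cvg_cst.
  apply: cvgM; [exact: cvg_cst|exact: cvg_id].
Qed.

Lemma fD (R : realType) d m (f g : Param R d m) k : (f + g) k = f k + g k.
Proof. by rewrite !ffunE. Qed.
Lemma fB (R : realType) d m (f g : Param R d m) k : (f - g) k = f k - g k.
Proof. by rewrite !ffunE. Qed.
Lemma fZ (R : realType) d m c (f : Param R d m) k : (c *: f) k = c * f k.
Proof. by rewrite !ffunE. Qed.

Definition Good (R : realType) d m (F : Param R d m -> R) :=
  exists G : Param R d m -> Param R d m,
  (forall (th : Param R d m) k, is_derive (0:R) 1
     (fun s : R => F [ffun l => th l + (if l == k then s else 0)]) (G th k)) /\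
  (forall th th' : Param R d m, F th + pdot (G th) (th' - th) <= F th').

Definition Aff (R : realType) d m (A : Param R d m -> R) :=
  exists l : Param R d m, forall th th' : Param R d m, A th' = A th + pdot l (th' - th).

Lemma pdot_e (R : realType) d m (l th : Param R d m) k s :
  pdot l ([ffun j => th j + (if j == k then s else 0)] - th) = l k * s.
Proof.
rewrite /pdot (bigD1 k) //= big1 ?addr0.
  by rewrite fB ffunE eqxx addrC addKr.
by move=> j /negbTE jk; rewrite fB ffunE jk addr0 subrr mulr0.
Qed.

Lemma Good_ext (R : realType) d m (F F' : Param R d m -> R) :
  Good F -> (forall th, F th = F' th) -> Good F'.
Proof. by move=> g e; have <- : F = F' by apply: funext. Qed.

Lemma Aff_ext (R : realType) d m (F F' : Param R d m -> R) :
  Aff F -> (forall th, F th = F' th) -> Aff F'.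
Proof. by move=> g e; have <- : F = F' by apply: funext. Qed.

Lemma Good_comp (R : realType) d m (A : Param R d m -> R) (h h' : R -> R) :
  Aff A -> (forall x y, h x + h' x * (y - x) <= h y) -> continuous h' ->
  Good (fun th => h (A th)).
Proof.
move=> [l Hl] tan hc.
exists (fun th => [ffun j => h' (A th) * l j]); split.
- move=> th k.
  have -> : (fun s => h (A [ffun j => th j + (if j == k then s else 0)]))
           = (fun s => h (A th + l k * s)).
    by apply: funext => s; rewrite (Hl th) pdot_e.
  rewrite ffunE; exact: tangent_affine.
- move=> th th'.
  have e : pdot [ffun j => h' (A th) * l j] (th' - th) = h' (A th) * (A th' - A th).
    rewrite (Hl th th') (addrC (A th)) addrK /pdot mulr_sumr; apply: eq_bigr => j _.
    by rewrite ffunE mulrA.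
  by rewrite e.
Qed.

Lemma Good_add (R : realType) d m (F1 F2 : Param R d m -> R) :
  Good F1 -> Good F2 -> Good (fun th => F1 th + F2 th).
Proof.
move=> [G1 [D1 T1]] [G2 [D2 T2]].
exists (fun th => [ffun j => G1 th j + G2 th j]); split.
- move=> th k; rewrite ffunE; exact: is_deriveD.
- move=> th th'.
  have e : pdot [ffun j => G1 th j + G2 th j] (th' - th)
         = pdot (G1 th) (th' - th) + pdot (G2 th) (th' - th).
    by rewrite /pdot -big_split; apply: eq_bigr => j _; rewrite ffunE mulrDl.
  have := T1 th th'; have := T2 th th'; rewrite e; lra.
Qed.

Lemma Good_scale (R : realType) d m (c : R) (F : Param R d m -> R) :
  0 <= c -> Good F -> Good (fun th => c * F th).
Proof.
move=> c0 [G [D T]].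
exists (fun th => [ffun j => c * G th j]); split.
- move=> th k; rewrite ffunE; exact: is_deriveZ.
- move=> th th'.
  have e : pdot [ffun j => c * G th j] (th' - th) = c * pdot (G th) (th' - th).
    by rewrite /pdot mulr_sumr; apply: eq_bigr => j _; rewrite ffunE mulrA.
  rewrite e; have := T th th'; nra.
Qed.

Lemma Good_cst (R : realType) d m (c : R) : Good (fun _ : Param R d m => c).
Proof.
exists (fun _ => [ffun=> 0]); split.
- move=> th k; rewrite ffunE; exact: is_derive_cst.
- move=> th th'; rewrite /pdot big1 ?addr0 // => j _; by rewrite ffunE mul0r.
Qed.

Lemma Good_sum (R : realType) d m (I : eqType) (r : seq I) (P : pred I)
  (Fs : I -> Param R d m -> R) :
  (forall i, i \in r -> P i -> Good (Fs i)) ->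
  Good (fun th => \sum_(i <- r | P i) Fs i th).
Proof.
elim: r => [|a r IH] H.
  by apply: (Good_ext (Good_cst _ _ 0)) => th; rewrite big_nil.
have IH' := IH (fun i ir => H i (@mem_behead _ (a :: r) i ir)).
case Pa: (P a).
  apply: (Good_ext (Good_add (H a (mem_head _ _) Pa) IH')) => th.
  by rewrite big_cons Pa.
by apply: (Good_ext IH') => th; rewrite big_cons Pa.
Qed.

Lemma Aff_cst (R : realType) d m (c : R) : Aff (fun _ : Param R d m => c).
Proof. exists 0; move=> th th'; rewrite /pdot big1 ?addr0 // => j _; by rewrite ffunE mul0r. Qed.

Lemma Aff_coord (R : realType) d m (k : PIdx d m) : Aff (fun th : Param R d m => th k).
Proof.
exists [ffun j => (j == k)%:R] => th th'.
rewrite /pdot (bigD1 k) //= big1 ?addr0.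
  by rewrite !ffunE eqxx mul1r addrC subrK.
by move=> j /negbTE jk; rewrite !ffunE jk mul0r.
Qed.

Lemma Aff_add (R : realType) d m (A B : Param R d m -> R) :
  Aff A -> Aff B -> Aff (fun th => A th + B th).
Proof.
move=> [l1 H1] [l2 H2]; exists (l1 + l2) => th th'.
rewrite (H1 th th') (H2 th th') /pdot.
have -> : \sum_k (l1 + l2) k * (th' - th) k =
   \sum_k l1 k * (th' - th) k + \sum_k l2 k * (th' - th) k.
  by rewrite -big_split; apply: eq_bigr => j _; rewrite fD mulrDl.
ring.
Qed.

Lemma Aff_scale (R : realType) d m (c : R) (A : Param R d m -> R) :
  Aff A -> Aff (fun th => c * A th).
Proof.
move=> [l H]; exists (c *: l) => th th'.
rewrite (H th th') /pdot mulrDr mulr_sumr; congr (_ + _); apply: eq_bigr => j _.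
by rewrite fZ mulrA.
Qed.

Lemma Aff_scaler (R : realType) d m (c : R) (A : Param R d m -> R) :
  Aff A -> Aff (fun th => A th * c).
Proof.
move=> HA; apply: (Aff_ext (Aff_scale c HA)) => th; exact: mulrC.
Qed.

Lemma Aff_sum (R : realType) d m (I : Type) (r : seq I) (P : pred I)
  (Fs : I -> Param R d m -> R) :
  (forall i, Aff (Fs i)) ->
  Aff (fun th => \sum_(i <- r | P i) Fs i th).
Proof.
move=> H; elim: r => [|a r IH].
  by apply: (Aff_ext (Aff_cst _ _ 0)) => th; rewrite big_nil.
case Pa: (P a).
  apply: (Aff_ext (Aff_add (H a) IH)) => th.
  by rewrite big_cons Pa.
by apply: (Aff_ext IH) => th; rewrite big_cons Pa.
Qed.

Lemma Good_grad (R : realType) d m (F : Param R d m -> R) :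
  Good F -> forall th th', F th + pdot (grad F th) (th' - th) <= F th'.
Proof.
move=> [G [D T]] th th'.
have -> : grad F th = G th.
  apply/ffunP => k; rewrite ffunE /partial derive1E.
  by case: (D th k) => _ ->.
exact: T.
Qed.

Lemma Good_convex (R : realType) d m (F : Param R d m -> R) :
  Good F -> convex_function setT F.
Proof.
move=> [G [_ T]] t x y _ _.

set z := x <| t |> y.
have zk : forall k, z k = t%:num * x k + (1 - t%:num) * y k.
  by move=> k; rewrite /z /= !ffunE.
have h1 := T z x; have h2 := T z y.
have e : t%:num * pdot (G z) (x - z) + (1 - t%:num) * pdot (G z) (y - z) = 0.
  rewrite /pdot !mulr_sumr -big_split big1 // => k _.
  rewrite !fB zk; rewrite /=; ring.
change (F z <= t%:num * F x + (1 - t%:num) * F y).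
have t0 : 0 <= t%:num by [].
have t1 : 0 <= (1 - t%:num) by rewrite subr_ge0.
nra.
Qed.

Lemma Aff_pseudo (R : realType) d m (I0 : Init R d m) (i : 'I_d) (y : nat -> R) :
  Aff (fun th => pseudo I0 th i y).
Proof.
rewrite /pseudo; apply: Aff_sum => r.
apply: Aff_scale; apply: Aff_add; last exact: Aff_coord.
apply: Aff_add; last exact: Aff_cst.
apply: Aff_sum => k; apply: Aff_scaler; apply: Aff_add; first exact: Aff_cst.
exact: Aff_coord.
Qed.

Lemma Delta_ge0 (R : realType) d (Q : nat) (x : 'rV[R]_d) (i : 'I_d) :
  norm2 x <= 2^-1 -> 0 <= Delta Q (Defs.coord x) i.
Proof.
move=> hx; rewrite /Delta divr_ge0 // /Defs.coord (_ : insub (i : nat) = Some i); last exact: valK.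
have : `|x ord0 i| <= 2^-1.
  apply: le_trans hx; rewrite /norm2 -sqrtr_sqr ler_sqrt; last first.
    by apply: sumr_ge0 => k _; rewrite sqr_ge0.
  rewrite (bigD1 i) //= lerDl; apply: sumr_ge0 => k _; by rewrite sqr_ge0.
rewrite ler_norml => /andP [h _].
have : (2^-1 : R) <= 1 by rewrite invf_le1 ?ler1n.
lra.
Qed.

Lemma Good_LX (R : realType) (d m Q : nat) (I0 : Init R d m) (X : seq 'rV[R]_d) :
  (forall x, x \in X -> norm2 x <= 2^-1) -> Good (LX Q I0 X).
Proof.
move=> hX.
apply: (@Good_ext _ _ _ (fun th => (size X)%:R^-1 * \sum_(x <- X) Lx Q I0 th x));
  last by move=> th; rewrite /LX mulrC.
apply: Good_scale; first by rewrite invr_ge0 ler0n.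
apply: Good_sum => x xX _.
rewrite /Lx /=.
apply: Good_sum => i _ _.
apply: Good_add.
  apply: Good_sum => j _ _.
  apply: Good_scale; first exact: Delta_ge0 (hX x xX).
  apply: (Good_comp _ (@phi_tan R) (@phid_cont R)).
  exact: Aff_pseudo.
apply: (Good_comp (h := fun u => - ln (phi u)) _ (@lphi_tan R) (@lphid_cont R)).
exact: Aff_pseudo.
Qed.

Local Close Scope convex_scope.
Unset Implicit Arguments.
Theorem lemma17 (R : realType) (d m Q T : nat) (I0 : Init R d m)
  (theta : nat -> Param R d m) (X : seq 'rV[R]_d) :
  (forall x, x \in X -> norm2 x <= 2^-1) ->
  convex_function setT (LX Q I0 X) /\
  (forall (t : nat) (theta_star : Param R d m), (1 <= t <= T)%N ->
     LX Q I0 X (theta t) - LX Q I0 X theta_star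
     <= pdot (grad (LX Q I0 X) (theta t)) (theta t - theta_star)).
Proof.
move=> hX; have G := Good_LX Q I0 hX; split; first exact: Good_convex.
move=> t ts _; have := Good_grad G (theta t) ts.
have -> : pdot (grad (LX Q I0 X) (theta t)) (ts - theta t)
        = - pdot (grad (LX Q I0 X) (theta t)) (theta t - ts).
  rewrite /pdot -sumrN; apply: eq_bigr => k _; rewrite !fB; ring.
lra.
Qed.
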